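(* Let $g(t)$, $t\in[0,T)$, be the maximal Ricci flow solution on $S^1\times S^3$ of the form $g(t)=\phi^2dz^2+a^2\omega^1\otimes\omega^1+b^2\omega^2\otimes\omega^2+c^2\omega^3\otimes\omega^3$ starting from initial data with $0<a\le b\le c$, and let $\check a(t)=\min_{s}a(s,t)$. If there exists $T<\infty$ such that $\check a(T)=0$, then $\check a(t)^2\le 4(T-t)$.
   Context: $S^3=SU(2)$ carries a global left-invariant frame $E_1,E_2,E_3$ with $[E_i,E_j]=-2\epsilon_{ijk}E_k$ and dual coframe $\omega^i$; $z\in S^1=[0,2\pi)$, $\phi,a,b,c$ positive smooth $2\pi$-periodic functions of $z$ (and $t$); $s$ is the arclength coordinate $ds=\phi\,dz$. The Ricci flow $\partial_tg=-2\mathrm{Ric}(g)$ preserves this form. $\check a(T)$ denotes the limiting value of $\check a(t)$ as $t\to T$. *)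

(* Defs.v *)
(* The Ricci flow on S^1 x S^3 restricted to the ansatz
     g(t) = phi^2 dz^2 + a^2 w1^2 + b^2 w2^2 + c^2 w3^2
   ([E_i,E_j] = -2 eps_ijk E_k) is encoded as the equivalent PDE system for
   (phi,a,b,c) : R -> R -> R (arguments z then t), 2*PI-periodic in z.
   Ricci tensor of this metric (orthonormal frame e0 = d/ds, e_i = E_i/a_i):
     Ric(e0,e0) = -(a_ss/a + b_ss/b + c_ss/c)
     Ric(e1,e1) = -a_ss/a - (a_s/a)(b_s/b + c_s/c)
                  + 2 (a^4 - (b^2-c^2)^2)/(a^2 b^2 c^2)   (and cyclically)
     mixed components vanish.
   d/dt g = -2 Ric then gives the system below. *)
From Stdlib Require Import Reals.
From Coquelicot Require Import Coquelicot.
Open Scope R_scope.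

Definition dz (f : R -> R -> R) : R -> R -> R :=
  fun z t => Derive (fun z' => f z' t) z.
Definition dt (f : R -> R -> R) : R -> R -> R :=
  fun z t => Derive (fun t' => f z t') t.

(* arclength derivative d/ds = (1/phi) d/dz *)
Definition ds (phi f : R -> R -> R) : R -> R -> R :=
  fun z t => dz f z t / phi z t.

Fixpoint CkOn (n : nat) (U : R -> R -> Prop) (f : R -> R -> R) : Prop :=
  match n with
  | O => forall z t, U z t ->
           continuous (fun p : R * R => f (fst p) (snd p)) (z, t)
  | S m => (forall z t, U z t ->
              ex_derive (fun z' => f z' t) z /\ ex_derive (fun t' => f z t') t)
           /\ CkOn m U (dz f) /\ CkOn m U (dt f)
  end.

Definition SmoothOn (U : R -> R -> Prop) (f : R -> R -> R) : Prop :=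
  forall n, CkOn n U f.

(* 2*PI-periodic in z, i.e. a function on S^1 = R / 2 PI Z *)
Definition periodic_z (f : R -> R -> R) : Prop :=
  forall z t, f (z + 2 * PI) t = f z t.

Definition RF_solution (phi a b c : R -> R -> R) (T : R) : Prop :=
  0 < T /\
  (forall f, (f = phi \/ f = a \/ f = b \/ f = c) ->
     periodic_z f /\
     SmoothOn (fun _ t => 0 < t < T) f /\
     (forall z t, 0 <= t < T ->
        continuous (fun p : R * R => f (fst p) (snd p)) (z, t)) /\
     (forall z t, 0 <= t < T -> 0 < f z t)) /\
  (forall z t, 0 < t < T ->
     let a_s := ds phi a in let b_s := ds phi b in let c_s := ds phi c in
     let a_ss := ds phi a_s in let b_ss := ds phi b_s in
     let c_ss := ds phi c_s in
     let A := a z t in let B := b z t in let C := c z t in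
     dt phi z t = phi z t * (a_ss z t / A + b_ss z t / B + c_ss z t / C) /\
     dt a z t = a_ss z t + a_s z t * (b_s z t / B + c_s z t / C)
                - 2 * (A ^ 4 - (B ^ 2 - C ^ 2) ^ 2) / (A * B ^ 2 * C ^ 2) /\
     dt b z t = b_ss z t + b_s z t * (c_s z t / C + a_s z t / A)
                - 2 * (B ^ 4 - (C ^ 2 - A ^ 2) ^ 2) / (B * C ^ 2 * A ^ 2) /\
     dt c z t = c_ss z t + c_s z t * (a_s z t / A + b_s z t / B)
                - 2 * (C ^ 4 - (A ^ 2 - B ^ 2) ^ 2) / (C * A ^ 2 * B ^ 2)).

Definition RF_maximal (phi a b c : R -> R -> R) (T : R) : Prop :=
  RF_solution phi a b c T /\
  ~ (exists T' phi' a' b' c', T < T' /\ RF_solution phi' a' b' c' T' /\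
       forall z t, 0 <= t < T ->
         phi' z t = phi z t /\ a' z t = a z t /\ b' z t = b z t /\
         c' z t = c z t).

Definition amin (a : R -> R -> R) (t : R) : R :=
  real (Glb_Rbar (fun y => exists z, y = a z t)).

(* Main.v *)
Require Import Defs.
From Stdlib Require Import Reals Lra Lia ZArith Classical ClassicalEpsilon.
From Coquelicot Require Import Coquelicot.
Open Scope R_scope.

Lemma clamp_lip p q x y : p <= q ->
  Rabs (Rmax p (Rmin q x) - Rmax p (Rmin q y)) <= Rabs (x - y).
Proof.
  intros. unfold Rmax, Rmin; repeat destruct Rle_dec; unfold Rabs;
  repeat destruct Rcase_abs; lra.
Qed.

Lemma minprinciple (F : R -> R) (p q : R) :
  p <= q ->
  (forall t, p <= t <= q -> forall eps, 0 < eps -> exists d, 0 < d /\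
     forall t', p <= t' <= q -> Rabs (t' - t) < d -> Rabs (F t' - F t) < eps) ->
  0 <= F p ->
  (forall s, p < s <= q -> F s < 0 -> exists g d,
     (forall h, p <= h <= s -> F h <= g h) /\ g s = F s /\
     derivable_pt_lim g s d /\ 0 <= d) ->
  0 <= F q.
Proof.
  intros Hpq Hc Hp Hd.
  destruct (Rle_lt_dec 0 (F q)) as [|Hq]; [assumption|exfalso].
  destruct (Req_dec p q) as [E|Hne]. { subst; lra. }
  assert (Hpq' : p < q) by lra.
  set (e := - F q / (2 * (q - p))).
  assert (He : 0 < e) by (unfold e; apply Rdiv_lt_0_compat; lra).
  assert (Heq : e * (q - p) = - F q / 2) by (unfold e; field; lra).
  set (Ft := fun t => F (Rmax p (Rmin q t)) + e * t).
  assert (Hcl : forall t, p <= t <= q -> Rmax p (Rmin q t) = t).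
  { intros t Ht. unfold Rmax, Rmin; repeat destruct Rle_dec; lra. }
  assert (Hcont : forall c, p <= c <= q -> continuity_pt Ft c).
  { intros c Hc0. unfold Ft. apply continuity_pt_plus.
    2: { apply continuity_pt_mult. apply continuity_pt_const; intros ? ?; reflexivity.
         apply derivable_continuous_pt, derivable_pt_id. }
    intros eps Heps. destruct (Hc c Hc0 eps Heps) as [d [Hd0 Hd1]].
    exists d. split; [lra|]. intros x [_ Hx]. simpl in *. unfold R_dist in *.
    rewrite (Hcl c Hc0). apply Hd1.
    - unfold Rmax, Rmin; repeat destruct Rle_dec; lra.
    - rewrite <- (Hcl c Hc0) at 1. eapply Rle_lt_trans. apply clamp_lip; lra. exact Hx. }
  destruct (continuity_ab_min Ft p q Hpq Hcont) as [s [Hmin Hs]].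
  assert (Hsq : Ft s <= Ft q) by (apply Hmin; lra).
  assert (Hpv : Ft p = F p + e * p) by (unfold Ft; rewrite Hcl; lra).
  assert (Hqv : Ft q = F q + e * q) by (unfold Ft; rewrite Hcl; lra).
  assert (Hsv : Ft s = F s + e * s) by (unfold Ft; rewrite Hcl; lra).
  assert (Hsp : p < s).
  { destruct (Req_dec s p) as [E|]; [|lra]. subst s. nra. }
  assert (HFs : F s < 0) by nra.
  destruct (Hd s (conj Hsp (proj2 Hs)) HFs) as [g [d [Hg1 [Hg2 [Hg3 Hg4]]]]].
  assert (He2 : 0 < e / 2) by lra.
  destruct (Hg3 (e/2) He2) as [del Hdel].
  set (k := Rmin (del / 2) (s - p)).
  assert (Hk : 0 < k) by (unfold k; apply Rmin_pos; [destruct del; simpl; lra| lra]).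
  assert (Hk1 : k <= s - p) by apply Rmin_r.
  assert (Hk2 : k < del) by (unfold k; destruct del as [del' Hd']; simpl in *;
     eapply Rle_lt_trans; [apply Rmin_l|lra]).
  specialize (Hdel (- k)).
  assert (H1 : - k <> 0) by lra.
  assert (H2 : Rabs (- k) < del) by (rewrite Rabs_Ropp, Rabs_pos_eq; lra).
  specialize (Hdel H1 H2).
  replace (s + - k) with (s - k) in Hdel by ring.
  assert (Hq1 : (g (s - k) - g s) / - k > d - e / 2).
  { apply Rabs_def2 in Hdel. lra. }
  assert (Hq2 : g (s - k) - g s < e / 2 * k).
  { assert (E : g (s - k) - g s = - k * ((g (s - k) - g s) / - k)) by (field; lra).
    rewrite E. nra. }
  assert (H3 : F (s - k) <= g (s - k)) by (apply Hg1; lra).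
  assert (H4 : Ft s <= Ft (s - k)) by (apply Hmin; lra).
  assert (H5 : Ft (s - k) = F (s - k) + e * (s - k)) by (unfold Ft; rewrite Hcl; lra).
  nra.
Qed.
Lemma min_deriv2 (h : R -> R) z0 : (forall z, h z0 <= h z) ->
  (forall z, ex_derive h z) -> ex_derive (Derive h) z0 ->
  Derive h z0 = 0 /\ 0 <= Derive (Derive h) z0.
Proof.
  intros Hm Hex Hex2.
  assert (H0 : Derive h z0 = 0).
  { rewrite <- (Derive_Reals h z0 (ex_derive_Reals_0 h z0 (Hex z0))).
    apply (deriv_minimum h (z0 - 1) (z0 + 1)); try lra. intros; apply Hm. }
  split; [exact H0|].
  destruct (Rle_lt_dec 0 (Derive (Derive h) z0)) as [|HD]; [assumption|exfalso].
  set (D := Derive (Derive h) z0) in *.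
  assert (HdD : derivable_pt_lim (Derive h) z0 D).
  { apply is_derive_Reals. apply Derive_correct. exact Hex2. }
  assert (He : 0 < - D / 2) by lra.
  destruct (HdD _ He) as [del Hdel].
  set (k := del / 2).
  assert (Hk : 0 < k) by (unfold k; destruct del; simpl; lra).
  assert (Hkd : k < del) by (unfold k; destruct del; simpl; lra).
  set (pr := fun x => ex_derive_Reals_0 h x (Hex x)).
  destruct (MVT_cor1 h z0 (z0 + k) pr) as [c [Hc1 Hc2]]; [lra|].
  rewrite Derive_Reals in Hc1.
  assert (Hneg : Derive h c < 0).
  { specialize (Hdel (c - z0)).
    assert (A1 : c - z0 <> 0) by lra.
    assert (A2 : Rabs (c - z0) < del) by (rewrite Rabs_pos_eq; lra).
    specialize (Hdel A1 A2). replace (z0 + (c - z0)) with c in Hdel by ring.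
    rewrite H0 in Hdel. apply Rabs_def2 in Hdel.
    assert (E : Derive h c = (c - z0) * ((Derive h c - 0) / (c - z0))) by (field; lra).
    rewrite E. set (Q := (Derive h c - 0) / (c - z0)) in *.
    assert (Q < 0) by lra. nra. }
  specialize (Hm (z0 + k)). nra.
Qed.
Definition JC (f : R -> R -> R) z t := forall eps, 0 < eps -> exists d, 0 < d /\
  forall z' t', Rabs (z' - z) < d -> Rabs (t' - t) < d -> Rabs (f z' t' - f z t) < eps.

Lemma cont_JC f z t : continuous (fun p : R * R => f (fst p) (snd p)) (z, t) -> JC f z t.
Proof.
  intros H eps He.
  unfold continuous in H. destruct (proj1 (@filterlim_locally (R*R) R_UniformSpace _ _ _ _) H (mkposreal eps He)) as [d Hd].
  exists d. split; [destruct d; simpl; lra|].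
  intros z' t' H1 H2. apply (Hd (z', t')). split; assumption.
Qed.

Lemma per_nat f (Hp : periodic_z f) t : forall n z, f (z + 2 * PI * INR n) t = f z t.
Proof.
  induction n; intros z.
  - simpl. f_equal. ring.
  - rewrite S_INR. replace (z + 2 * PI * (INR n + 1)) with ((z + 2 * PI * INR n) + 2 * PI) by ring.
    rewrite Hp. apply IHn.
Qed.

Lemma per_Z f (Hp : periodic_z f) t : forall k z, f (z + 2 * PI * IZR k) t = f z t.
Proof.
  intros k z. destruct (Z.le_gt_cases 0 k) as [Hk|Hk].
  - destruct (Z_of_nat_complete k Hk) as [n ->]. rewrite <- INR_IZR_INZ. apply per_nat; auto.
  - assert (Hk' : (0 <= - k)%Z) by lia.
    destruct (Z_of_nat_complete _ Hk') as [n Hn].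
    replace k with (- Z.of_nat n)%Z by lia. rewrite opp_IZR, <- INR_IZR_INZ.
    rewrite <- (per_nat f Hp t n (z + 2 * PI * - INR n)). f_equal. ring.
Qed.

Lemma per_red f (Hp : periodic_z f) z : exists z', 0 <= z' <= 2 * PI /\
  forall t, f z' t = f z t.
Proof.
  pose proof PI_RGT_0.
  set (r := z / (2 * PI)). destruct (archimed r) as [H1 H2].
  exists (z + 2 * PI * IZR (- (up r - 1))). split.
  - rewrite opp_IZR, minus_IZR. simpl.
    assert (E : z = 2 * PI * r) by (unfold r; field; lra).
    split; rewrite E; nra.
  - intros t. apply per_Z; auto.
Qed.

Lemma JC_cont_z f z t : JC f z t -> continuity_pt (fun z' => f z' t) z.
Proof.
  intros H eps He. destruct (H eps He) as [d [Hd H']]. exists d. split; [lra|].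
  intros x [_ Hx]. simpl in *. unfold R_dist in *. apply H'; auto.
  rewrite Rminus_eq_0, Rabs_R0. lra.
Qed.

Lemma min_att f t : periodic_z f -> (forall z, JC f z t) ->
  exists z0, 0 <= z0 <= 2 * PI /\ (forall z, f z0 t <= f z t) /\ amin f t = f z0 t.
Proof.
  intros Hp Hc. pose proof PI_RGT_0.
  destruct (continuity_ab_min (fun z => f z t) 0 (2 * PI)) as [z0 [Hm Hz0]].
  lra. intros; apply JC_cont_z, Hc.
  assert (Hall : forall z, f z0 t <= f z t).
  { intros z. destruct (per_red f Hp z) as [z' [Hz' Ez']]. rewrite <- Ez'. apply Hm; auto. }
  exists z0. split; [auto|split; [auto|]].
  unfold amin. rewrite (is_glb_Rbar_unique _ (Finite (f z0 t))). reflexivity.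
  split.
  - intros y [z ->]. simpl. apply Hall.
  - intros b Hb. apply Hb. exists z0. reflexivity.
Qed.

Lemma UC f t : (forall z, 0 <= z <= 2 * PI -> JC f z t) ->
  forall eps, 0 < eps -> exists d, 0 < d /\ forall z t', 0 <= z <= 2 * PI ->
    Rabs (t' - t) < d -> Rabs (f z t' - f z t) < eps.
Proof.
  intros Hc eps He.
  assert (Hch : forall z, exists del : posreal, 0 <= z <= 2 * PI ->
     forall z' t', Rabs (z' - z) < del -> Rabs (t' - t) < del ->
       Rabs (f z' t' - f z t) < eps / 2).
  { intros z. destruct (classic (0 <= z <= 2 * PI)) as [Hz|Hz].
    - destruct (Hc z Hz (eps / 2)) as [d [Hd H']]; [lra|].
      exists (mkposreal d Hd). intros _. exact H'.
    - exists (mkposreal 1 Rlt_0_1). intros; contradiction. }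
  set (delta := fun z => proj1_sig (constructive_indefinite_description _ (Hch z))).
  assert (Hdel : forall z, 0 <= z <= 2 * PI ->
     forall z' t', Rabs (z' - z) < delta z -> Rabs (t' - t) < delta z ->
       Rabs (f z' t' - f z t) < eps / 2).
  { intros z. unfold delta. destruct (constructive_indefinite_description _ (Hch z)). simpl. auto. }
  destruct (compactness_value_1d 0 (2 * PI) delta) as [d Hd].
  exists d. split; [destruct d; simpl; lra|].
  intros z t' Hz Ht. apply NNPP. intros Hn. apply (Hd z Hz). intros [u [Hu [Hzu Hdu]]].
  apply Hn.
  assert (A1 : Rabs (f z t' - f u t) < eps / 2).
  { apply Hdel; auto. lra. }
  assert (A2 : Rabs (f z t - f u t) < eps / 2).
  { apply Hdel; auto. rewrite Rminus_eq_0, Rabs_R0. destruct (delta u); simpl; lra. }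
  apply Rabs_def2 in A1. apply Rabs_def2 in A2. apply Rabs_def1; lra.
Qed.

Lemma amin_cont f p q : periodic_z f -> (forall t, p <= t <= q -> forall z, JC f z t) ->
  forall t, p <= t <= q -> forall eps, 0 < eps -> exists d, 0 < d /\
     forall t', p <= t' <= q -> Rabs (t' - t) < d -> Rabs (amin f t' - amin f t) < eps.
Proof.
  intros Hp Hc t Ht eps He.
  destruct (UC f t (fun z _ => Hc t Ht z) (eps / 2)) as [d [Hd H']]; [lra|].
  exists d. split; auto. intros t' Ht' Htt.
  destruct (min_att f t Hp (Hc t Ht)) as [z0 [Hz0 [Hm0 E0]]].
  destruct (min_att f t' Hp (Hc t' Ht')) as [z1 [Hz1 [Hm1 E1]]].
  rewrite E0, E1.
  pose proof (H' z0 t' Hz0 Htt). pose proof (H' z1 t' Hz1 Htt).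
  specialize (Hm0 z1). specialize (Hm1 z0).
  apply Rabs_def2 in H. apply Rabs_def2 in H0. apply Rabs_def1; lra.
Qed.

Lemma EVT_within (F : R -> R) p q : p <= q ->
  (forall t, p <= t <= q -> forall eps, 0 < eps -> exists d, 0 < d /\
     forall t', p <= t' <= q -> Rabs (t' - t) < d -> Rabs (F t' - F t) < eps) ->
  exists s, p <= s <= q /\ forall t, p <= t <= q -> F s <= F t.
Proof.
  intros Hpq Hc.
  set (Ft := fun t => F (Rmax p (Rmin q t))).
  assert (Hcl : forall t, p <= t <= q -> Rmax p (Rmin q t) = t).
  { intros t Ht. unfold Rmax, Rmin; repeat destruct Rle_dec; lra. }
  assert (Hcont : forall c, p <= c <= q -> continuity_pt Ft c).
  { intros c Hc0. unfold Ft.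
    intros eps Heps. destruct (Hc c Hc0 eps Heps) as [d [Hd0 Hd1]].
    exists d. split; [lra|]. intros x [_ Hx]. simpl in *. unfold R_dist in *.
    rewrite (Hcl c Hc0). apply Hd1.
    - unfold Rmax, Rmin; repeat destruct Rle_dec; lra.
    - rewrite <- (Hcl c Hc0) at 1. eapply Rle_lt_trans. apply clamp_lip; lra. exact Hx. }
  destruct (continuity_ab_min Ft p q Hpq Hcont) as [s [Hmin Hs]].
  exists s. split; auto. intros t Ht. specialize (Hmin t Ht). unfold Ft in Hmin.
  rewrite !Hcl in Hmin; auto.
Qed.

Lemma cont_W (a b : R -> R -> R) K z t :
  continuous (fun p : R * R => a (fst p) (snd p)) (z, t) ->
  continuous (fun p : R * R => b (fst p) (snd p)) (z, t) -> a z t <> 0 ->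
  continuous (fun p : R * R => (b (fst p) (snd p) / a (fst p) (snd p) - 1) * exp (- K * snd p)) (z, t).
Proof.
  intros Ha Hb Ha0.
  apply (continuous_mult (K := R_AbsRing)
     (fun p : R * R => b (fst p) (snd p) / a (fst p) (snd p) - 1)
     (fun p : R * R => exp (- K * snd p))).
  - apply (continuous_minus (K := R_AbsRing) (V := R_NormedModule)
       (fun p : R * R => b (fst p) (snd p) / a (fst p) (snd p)) (fun _ => 1)).
    + apply (continuous_mult (K := R_AbsRing)); auto.
      apply (continuous_comp (fun p : R * R => a (fst p) (snd p)) Rinv); auto.
      apply continuous_Rinv; auto.
    + apply continuous_const.
  - apply (continuous_comp (fun p : R * R => - K * snd p) exp).
    + apply (continuous_mult (K := R_AbsRing) (fun _ => - K) (fun p : R * R => snd p)).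
      apply continuous_const. apply continuous_snd.
    + apply continuous_exp.
Qed.
Lemma alg_ord A B C ph Da Dc Dph D2a D2b mu K at_ bt :
  0 < A -> 0 < B -> 0 < C -> 0 < ph -> 0 < mu -> mu <= A -> mu <= B -> B < A ->
  K = 8 / mu ^ 2 ->
  0 <= D2b - B / A * D2a ->
  at_ = (D2a * ph - Da * Dph) / ph ^ 2 / ph + Da / ph * ((B / A * Da) / ph / B + Dc / ph / C)
        - 2 * (A ^ 4 - (B ^ 2 - C ^ 2) ^ 2) / (A * B ^ 2 * C ^ 2) ->
  bt = (D2b * ph - (B / A * Da) * Dph) / ph ^ 2 / ph + (B / A * Da) / ph * (Dc / ph / C + Da / ph / A)
        - 2 * (B ^ 4 - (C ^ 2 - A ^ 2) ^ 2) / (B * C ^ 2 * A ^ 2) ->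
  0 <= (bt * A - B * at_) / A ^ 2 - K * (B / A - 1).
Proof.
  intros HA HB HC Hp Hm HmA HmB HBA HK HD2 Ha Hb.
  assert (E : (bt * A - B * at_) / A ^ 2 - K * (B / A - 1) =
     (D2b - B / A * D2a) / (ph ^ 2 * A) +
     (A - B) / A * (4 * (A + B) * (A ^ 2 + B ^ 2 - C ^ 2) / (A ^ 2 * B * C ^ 2) + K)).
  { subst at_ bt. field. repeat split; lra. }
  rewrite E. clear E Ha Hb.
  assert (T1 : 0 <= (D2b - B / A * D2a) / (ph ^ 2 * A)).
  { unfold Rdiv. apply Rmult_le_pos; [lra|]. left. apply Rinv_0_lt_compat. apply Rmult_lt_0_compat; [apply pow_lt|]; lra. }
  assert (T2 : 0 < (A - B) / A) by (apply Rdiv_lt_0_compat; lra).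
  assert (T3 : 0 <= 4 * (A + B) * (A ^ 2 + B ^ 2 - C ^ 2) / (A ^ 2 * B * C ^ 2) + K).
  { assert (L1 : 4 * (A + B) * (A ^ 2 + B ^ 2 - C ^ 2) / (A ^ 2 * B * C ^ 2) >=
                 - (4 / (A * B) + 4 / (A * A))).
    { assert (P : 0 < A ^ 2 * B * C ^ 2) by (repeat apply Rmult_lt_0_compat; try apply pow_lt; lra).
      assert (E2 : - (4 / (A * B) + 4 / (A * A)) = 4 * (A + B) * (- C ^ 2) / (A ^ 2 * B * C ^ 2))
        by (field; lra).
      rewrite E2. unfold Rdiv. apply Rle_ge. apply Rmult_le_compat_r.
      left; apply Rinv_0_lt_compat; exact P.
      apply Rmult_le_compat_l; [lra|]. assert (0 <= A ^ 2 + B ^ 2) by nra. lra. }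
    assert (L2 : 4 / (A * B) <= 4 / (mu * mu)).
    { unfold Rdiv. apply Rmult_le_compat_l; [lra|]. apply Rinv_le_contravar.
      nra. apply Rmult_le_compat; lra. }
    assert (L3 : 4 / (A * A) <= 4 / (mu * mu)).
    { unfold Rdiv. apply Rmult_le_compat_l; [lra|]. apply Rinv_le_contravar.
      nra. apply Rmult_le_compat; lra. }
    assert (L4 : K = 4 / (mu * mu) + 4 / (mu * mu)) by (rewrite HK; field; lra).
    lra. }
  assert (0 <= (A - B) / A * (4 * (A + B) * (A ^ 2 + B ^ 2 - C ^ 2) / (A ^ 2 * B * C ^ 2) + K)).
  { apply Rmult_le_pos; lra. }
  lra.
Qed.

Lemma alg_amin A B C ph Db Dc Dph D2a at_ :
  0 < A -> 0 < B -> 0 < C -> 0 < ph -> A <= B -> A <= C -> 0 <= D2a ->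
  at_ = (D2a * ph - 0 * Dph) / ph ^ 2 / ph + 0 / ph * (Db / ph / B + Dc / ph / C)
        - 2 * (A ^ 4 - (B ^ 2 - C ^ 2) ^ 2) / (A * B ^ 2 * C ^ 2) ->
  0 <= 2 * A * at_ + 4.
Proof.
  intros HA HB HC Hp HAB HAC HD Ha.
  assert (E : 2 * A * at_ + 4 = 2 * A * (D2a / ph ^ 2)
     + 4 * (B ^ 2 * C ^ 2 - A ^ 4 + (B ^ 2 - C ^ 2) ^ 2) / (B ^ 2 * C ^ 2)).
  { subst at_. rewrite Rmult_0_l, Rminus_0_r. replace (0 / ph) with 0 by (unfold Rdiv; ring). field. repeat split; lra. }
  rewrite E.
  assert (T1 : 0 <= 2 * A * (D2a / ph ^ 2)).
  { apply Rmult_le_pos; [lra|]. unfold Rdiv. apply Rmult_le_pos; [lra|].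
    left; apply Rinv_0_lt_compat, pow_lt; lra. }
  assert (T2 : 0 <= 4 * (B ^ 2 * C ^ 2 - A ^ 4 + (B ^ 2 - C ^ 2) ^ 2) / (B ^ 2 * C ^ 2)).
  { unfold Rdiv. apply Rmult_le_pos.
    - assert (A ^ 2 <= B ^ 2) by (apply pow_incr; lra).
      assert (A ^ 2 <= C ^ 2) by (apply pow_incr; lra).
      assert (A ^ 4 <= B ^ 2 * C ^ 2).
      { replace (A ^ 4) with (A ^ 2 * A ^ 2) by ring. apply Rmult_le_compat; try nra. }
      assert (0 <= (B ^ 2 - C ^ 2) ^ 2) by apply pow2_ge_0. lra.
    - left. apply Rinv_0_lt_compat. apply Rmult_lt_0_compat; apply pow_lt; lra. }
  lra.
Qed.

Lemma smooth_facts (U : R -> R -> Prop) (f : R -> R -> R) : SmoothOn U f -> forall z t, U z t ->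
  ex_derive (fun z' => f z' t) z /\ ex_derive (fun t' => f z t') t /\
  ex_derive (fun z' => dz f z' t) z.
Proof.
  intros H z t Hu. destruct (H 2%nat) as [H1 [H2 _]]. destruct H2 as [H3 _].
  destruct (H1 z t Hu). destruct (H3 z t Hu). auto.
Qed.

Lemma ss_formula (phi f : R -> R -> R) (z t : R) : ex_derive (fun z' => dz f z' t) z ->
  ex_derive (fun z' => phi z' t) z -> phi z t <> 0 ->
  ds phi (ds phi f) z t =
  (Derive (fun z' => dz f z' t) z * phi z t - dz f z t * dz phi z t) / phi z t ^ 2 / phi z t.
Proof.
  intros H1 H2 H3.
  replace (ds phi (ds phi f) z t) with (Derive (fun z' => dz f z' t / phi z' t) z / phi z t) by reflexivity.
  rewrite Derive_div; auto.
Qed.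

Lemma div_ge1 x y : 0 < x -> x <= y -> 0 <= y / x - 1.
Proof.
  intros. replace (y / x - 1) with ((y - x) / x) by (field; lra).
  unfold Rdiv; apply Rmult_le_pos; [lra| left; apply Rinv_0_lt_compat; lra].
Qed.

Lemma div_ge1_inv x y : 0 < x -> 0 <= y / x - 1 -> x <= y.
Proof.
  intros. assert (E : y = x * (y / x)) by (field; lra).
  set (q := y / x) in *. rewrite E. nra.
Qed.

Lemma div_lt1_inv x y : 0 < x -> y / x - 1 < 0 -> y < x.
Proof.
  intros. assert (E : y = x * (y / x)) by (field; lra).
  set (q := y / x) in *. rewrite E. nra.
Qed.
Lemma exd_lin (f g : R -> R) k x : ex_derive f x -> ex_derive g x -> ex_derive (fun y => f y - k * g y) x.
Proof. intros. apply (ex_derive_minus (K := R_AbsRing) (V := R_NormedModule) f (fun y => k * g y)); auto. apply ex_derive_scal; auto. Qed.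
Lemma Der_lin (f g : R -> R) k x : ex_derive f x -> ex_derive g x -> Derive (fun y => f y - k * g y) x = Derive f x - k * Derive g x.
Proof. intros. rewrite Derive_minus; auto. rewrite Derive_scal; auto. apply ex_derive_scal; auto. Qed.
Lemma ord_gen (phi a b c : R -> R -> R) (T t1 : R) :
  0 <= t1 < T ->
  periodic_z a -> periodic_z b ->
  (forall z t, 0 <= t < T -> continuous (fun p : R * R => a (fst p) (snd p)) (z, t)) ->
  (forall z t, 0 <= t < T -> continuous (fun p : R * R => b (fst p) (snd p)) (z, t)) ->
  (forall z t, 0 <= t < T -> 0 < a z t /\ 0 < b z t /\ 0 < c z t /\ 0 < phi z t) ->
  (forall z t, 0 < t < T -> ex_derive (fun z' => a z' t) z /\ ex_derive (fun t' => a z t') t /\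
     ex_derive (fun z' => dz a z' t) z) ->
  (forall z t, 0 < t < T -> ex_derive (fun z' => b z' t) z /\ ex_derive (fun t' => b z t') t /\
     ex_derive (fun z' => dz b z' t) z) ->
  (forall z t, 0 < t < T -> ex_derive (fun z' => phi z' t) z) ->
  (forall z t, 0 < t < T ->
     dt a z t = ds phi (ds phi a) z t + ds phi a z t * (ds phi b z t / b z t + ds phi c z t / c z t)
       - 2 * (a z t ^ 4 - (b z t ^ 2 - c z t ^ 2) ^ 2) / (a z t * b z t ^ 2 * c z t ^ 2)) ->
  (forall z t, 0 < t < T ->
     dt b z t = ds phi (ds phi b) z t + ds phi b z t * (ds phi c z t / c z t + ds phi a z t / a z t)
       - 2 * (b z t ^ 4 - (c z t ^ 2 - a z t ^ 2) ^ 2) / (b z t * c z t ^ 2 * a z t ^ 2)) ->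
  (forall z, a z 0 <= b z 0) ->
  forall z, a z t1 <= b z t1.
Proof.
  intros [Ht0 Ht1] Hpa Hpb Hca Hcb Hpos Hda Hdb Hdphi Hea Heb Hinit.
  assert (JCa : forall t, 0 <= t <= t1 -> forall z, JC a z t).
  { intros t Ht z. apply cont_JC, Hca. lra. }
  assert (JCb : forall t, 0 <= t <= t1 -> forall z, JC b z t).
  { intros t Ht z. apply cont_JC, Hcb. lra. }
  destruct (EVT_within (amin a) 0 t1 Ht0 (amin_cont a 0 t1 Hpa JCa)) as [sa [Hsa Hma]].
  destruct (EVT_within (amin b) 0 t1 Ht0 (amin_cont b 0 t1 Hpb JCb)) as [sb [Hsb Hmb]].
  destruct (min_att a sa Hpa (JCa sa Hsa)) as [za [_ [_ Ea]]].
  destruct (min_att b sb Hpb (JCb sb Hsb)) as [zb [_ [_ Eb]]].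
  set (mu := Rmin (amin a sa) (amin b sb)).
  assert (Hmu0 : 0 < mu).
  { unfold mu. rewrite Ea, Eb. apply Rmin_pos.
    apply (Hpos za sa); lra. apply (Hpos zb sb); lra. }
  assert (Hmu : forall z t, 0 <= t <= t1 -> mu <= a z t /\ mu <= b z t).
  { intros z t Ht.
    destruct (min_att a t Hpa (JCa t Ht)) as [z1 [_ [Hm1 E1]]].
    destruct (min_att b t Hpb (JCb t Ht)) as [z2 [_ [Hm2 E2]]].
    specialize (Hma t Ht). specialize (Hmb t Ht).
    assert (mu <= amin a sa) by apply Rmin_l. assert (mu <= amin b sb) by apply Rmin_r.
    specialize (Hm1 z). specialize (Hm2 z). split; lra. }
  set (K := 8 / mu ^ 2).
  set (W := fun z t => (b z t / a z t - 1) * exp (- K * t)).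
  assert (HpW : periodic_z W).
  { intros z t. unfold W. rewrite Hpa, Hpb. reflexivity. }
  assert (JCW : forall t, 0 <= t <= t1 -> forall z, JC W z t).
  { intros t Ht z. apply cont_JC. apply cont_W; try (apply Hca || apply Hcb); try lra.
    assert (0 < a z t) by (apply Hpos; lra). lra. }
  assert (HF : 0 <= amin W t1).
  { apply (minprinciple (amin W) 0 t1 Ht0 (amin_cont W 0 t1 HpW JCW)).
    - destruct (min_att W 0 HpW (JCW 0 ltac:(lra))) as [z0 [_ [_ E]]]. rewrite E. unfold W.
      rewrite Rmult_0_r, exp_0, Rmult_1_r. apply div_ge1; auto. apply Hpos; lra.
    - intros s [Hs0 Hs1] HFs.
      destruct (min_att W s HpW (JCW s ltac:(lra))) as [z0 [_ [Hm0 E0]]].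
      assert (Hs : 0 < s < T) by lra.
      destruct (Hpos z0 s ltac:(lra)) as [HA [HB [HC Hph]]].
      set (A := a z0 s) in *. set (B := b z0 s) in *. set (C := c z0 s) in *.
      exists (fun t' => W z0 t').
      exists (((dt b z0 s * A - B * dt a z0 s) / A ^ 2 - K * (B / A - 1)) * exp (- K * s)).
      split.
      { intros h Hh. destruct (min_att W h HpW (JCW h ltac:(lra))) as [z1 [_ [Hm1 E1]]].
        rewrite E1. apply Hm1. }
      split; [symmetry; exact E0|].
      split.
      { apply is_derive_Reals. unfold W.
        destruct (Hda z0 s Hs) as [_ [Hta _]]. destruct (Hdb z0 s Hs) as [_ [Htb _]].
        auto_derive. repeat split; auto; unfold A in HA; lra.
        unfold dt, A, B. field. unfold A in HA; lra. }
      apply Rmult_le_pos; [| left; apply exp_pos].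
      assert (Hexp : 0 < exp (- K * s)) by apply exp_pos.
      assert (Hrat : forall z, B / A * a z s <= b z s).
      { intros z. specialize (Hm0 z). unfold W in Hm0. fold A B in Hm0.
        apply Rmult_le_reg_r in Hm0; [|exact Hexp].
        destruct (Hpos z s) as [Haz [Hbz _]]; [lra|].
        assert (B / A <= b z s / a z s) by lra.
        replace (b z s) with (b z s / a z s * a z s) by (field; lra).
        apply Rmult_le_compat_r; lra. }
      pose proof (fun z => proj1 (Hda z s Hs)) as Daz.
      pose proof (fun z => proj2 (proj2 (Hda z s Hs))) as Dazz.
      pose proof (fun z => proj1 (Hdb z s Hs)) as Dbz.
      pose proof (fun z => proj2 (proj2 (Hdb z s Hs))) as Dbzz.
      set (h := fun z => b z s - B / A * a z s).
      assert (Hhex : forall z, ex_derive h z).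
      { intros z. unfold h.
        apply (exd_lin (fun z => b z s) (fun z => a z s)). apply Dbz. apply Daz. }
      assert (HDh : forall z, Derive h z = dz b z s - B / A * dz a z s).
      { intros z. unfold h. rewrite (Der_lin (fun z => b z s) (fun z => a z s)). reflexivity.
        apply Dbz. apply Daz. }
      assert (Hex2 : ex_derive (fun z => dz b z s - B / A * dz a z s) z0).
      { apply (exd_lin (fun z => dz b z s) (fun z => dz a z s)). apply Dbzz. apply Dazz. }
      assert (Hhex2 : ex_derive (Derive h) z0).
      { apply (ex_derive_ext (fun z => dz b z s - B / A * dz a z s)).
        intros; symmetry; apply HDh. exact Hex2. }
      assert (Hhmin : forall z, h z0 <= h z).
      { intros z. unfold h.
        replace (b z0 s - B / A * a z0 s) with 0 by (unfold A, B; field; unfold A in HA; lra).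
        specialize (Hrat z). lra. }
      destruct (min_deriv2 h z0 Hhmin Hhex Hhex2) as [H1 H2].
      rewrite HDh in H1.
      rewrite (Derive_ext (Derive h) (fun z => dz b z s - B / A * dz a z s)) in H2 by apply HDh.
      rewrite (Der_lin (fun z => dz b z s) (fun z => dz a z s)) in H2.
      2: apply Dbzz.
      2: apply Dazz.
      assert (Ea' := Hea z0 s Hs). assert (Eb' := Heb z0 s Hs).
      rewrite ss_formula in Ea'; [| apply Dazz | apply Hdphi; auto | lra].
      rewrite ss_formula in Eb'; [| apply Dbzz | apply Hdphi; auto | lra].
      unfold ds in Ea', Eb'.
      assert (Edb : dz b z0 s = B / A * dz a z0 s) by lra.
      rewrite Edb in Ea', Eb'.
      assert (HBA : B < A).
      { rewrite E0 in HFs. unfold W in HFs. fold A B in HFs.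
        assert (B / A - 1 < 0).
        { destruct (Rlt_or_le (B / A - 1) 0) as [|Hc]; auto.
          assert (0 <= (B / A - 1) * exp (- K * s)) by (apply Rmult_le_pos; lra). lra. }
        apply div_lt1_inv; auto. }
      destruct (Hmu z0 s ltac:(lra)) as [HmA HmB].
      apply (alg_ord A B C (phi z0 s) (dz a z0 s) (dz c z0 s) (dz phi z0 s)
               (Derive (fun z' => dz a z' s) z0) (Derive (fun z' => dz b z' s) z0) mu K); auto.
      }
  intros z. destruct (min_att W t1 HpW (JCW t1 ltac:(lra))) as [z1 [_ [Hm1 E1]]].
  specialize (Hm1 z). rewrite <- E1 in Hm1.
  assert (Hw : 0 <= W z t1) by lra. unfold W in Hw.
  destruct (Hpos z t1 ltac:(lra)) as [Haz [Hbz _]].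
  apply div_ge1_inv; auto.
  assert (Hexp : 0 < exp (- K * t1)) by apply exp_pos.
  destruct (Rlt_or_le (b z t1 / a z t1 - 1) 0) as [Hn|]; auto.
  assert ((b z t1 / a z t1 - 1) * exp (- K * t1) < 0)
    by (set (q := b z t1 / a z t1 - 1) in *; nra).
  lra.
Qed.

Lemma cont_V (a : R -> R -> R) z t :
  continuous (fun p : R * R => a (fst p) (snd p)) (z, t) ->
  continuous (fun p : R * R => a (fst p) (snd p) * a (fst p) (snd p) + 4 * snd p) (z, t).
Proof.
  intros Ha.
  apply (continuous_plus (K := R_AbsRing) (V := R_NormedModule)
     (fun p : R * R => a (fst p) (snd p) * a (fst p) (snd p)) (fun p : R * R => 4 * snd p)).
  - apply (continuous_mult (K := R_AbsRing)); auto.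
  - apply (continuous_mult (K := R_AbsRing) (fun _ => 4) (fun p : R * R => snd p)).
    apply continuous_const. apply continuous_snd.
Qed.


Theorem lemma4p1 (phi a b c : R -> R -> R) (T : R) :
  RF_maximal phi a b c T ->
  (forall z, a z 0 <= b z 0 /\ b z 0 <= c z 0) ->
  filterlim (amin a) (at_left T) (locally 0) ->
  forall t, 0 <= t < T -> (amin a t) ^ 2 <= 4 * (T - t).
Proof.
  intros [Hsol _] Hinit Hlim t Ht.
  destruct Hsol as [HT [Hf Hpde]].
  destruct (Hf phi (or_introl eq_refl)) as [Pphi [Sphi [Cphi Pos_phi]]].
  destruct (Hf a (or_intror (or_introl eq_refl))) as [Pa [Sa [Ca Pos_a]]].
  destruct (Hf b (or_intror (or_intror (or_introl eq_refl)))) as [Pb [Sb [Cb Pos_b]]].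
  destruct (Hf c (or_intror (or_intror (or_intror eq_refl)))) as [Pc [Sc [Cc Pos_c]]].
  assert (Hpos : forall z t, 0 <= t < T -> 0 < a z t /\ 0 < b z t /\ 0 < c z t /\ 0 < phi z t).
  { intros z t0 H0. split; [apply Pos_a; exact H0|]. split; [apply Pos_b; exact H0|].
    split; [apply Pos_c; exact H0|apply Pos_phi; exact H0]. }
  assert (Hpos' : forall z t, 0 <= t < T -> 0 < a z t /\ 0 < c z t /\ 0 < b z t /\ 0 < phi z t).
  { intros z t0 H0. destruct (Hpos z t0 H0) as [? [? [? ?]]]. auto. }
  assert (Hda : forall z t, 0 < t < T -> ex_derive (fun z' => a z' t) z /\ ex_derive (fun t' => a z t') t /\
     ex_derive (fun z' => dz a z' t) z) by (intros z t0 H0; exact (smooth_facts _ a Sa z t0 H0)).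
  assert (Hdb : forall z t, 0 < t < T -> ex_derive (fun z' => b z' t) z /\ ex_derive (fun t' => b z t') t /\
     ex_derive (fun z' => dz b z' t) z) by (intros z t0 H0; exact (smooth_facts _ b Sb z t0 H0)).
  assert (Hdc : forall z t, 0 < t < T -> ex_derive (fun z' => c z' t) z /\ ex_derive (fun t' => c z t') t /\
     ex_derive (fun z' => dz c z' t) z) by (intros z t0 H0; exact (smooth_facts _ c Sc z t0 H0)).
  assert (Hdphi : forall z t, 0 < t < T -> ex_derive (fun z' => phi z' t) z)
    by (intros z t0 H0; exact (proj1 (smooth_facts _ phi Sphi z t0 H0))).
  assert (PDE : forall z t, 0 < t < T ->
     dt a z t = ds phi (ds phi a) z t + ds phi a z t * (ds phi b z t / b z t + ds phi c z t / c z t)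
       - 2 * (a z t ^ 4 - (b z t ^ 2 - c z t ^ 2) ^ 2) / (a z t * b z t ^ 2 * c z t ^ 2) /\
     dt b z t = ds phi (ds phi b) z t + ds phi b z t * (ds phi c z t / c z t + ds phi a z t / a z t)
       - 2 * (b z t ^ 4 - (c z t ^ 2 - a z t ^ 2) ^ 2) / (b z t * c z t ^ 2 * a z t ^ 2) /\
     dt c z t = ds phi (ds phi c) z t + ds phi c z t * (ds phi a z t / a z t + ds phi b z t / b z t)
       - 2 * (c z t ^ 4 - (a z t ^ 2 - b z t ^ 2) ^ 2) / (c z t * a z t ^ 2 * b z t ^ 2)).
  { intros z t0 H0. pose proof (Hpde z t0 H0) as P. cbv zeta in P. destruct P as [_ P]. exact P. }
  assert (Oab : forall t1, 0 <= t1 < T -> forall z, a z t1 <= b z t1).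
  { intros t1 Ht1. apply (ord_gen phi a b c T t1 Ht1 Pa Pb Ca Cb Hpos Hda Hdb Hdphi).
    - intros z t0 H0; exact (proj1 (PDE z t0 H0)).
    - intros z t0 H0; exact (proj1 (proj2 (PDE z t0 H0))).
    - intros z; apply Hinit. }
  assert (Oac : forall t1, 0 <= t1 < T -> forall z, a z t1 <= c z t1).
  { intros t1 Ht1. apply (ord_gen phi a c b T t1 Ht1 Pa Pc Ca Cc Hpos' Hda Hdc Hdphi).
    - intros z t0 H0. destruct (PDE z t0 H0) as [E _]. rewrite E.
      destruct (Hpos z t0 ltac:(lra)) as [H1 [H2 [H3 _]]]. field. lra.
    - intros z t0 H0. destruct (PDE z t0 H0) as [_ [_ E]]. rewrite E.
      destruct (Hpos z t0 ltac:(lra)) as [H1 [H2 [H3 _]]]. field. lra.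
    - intros z; specialize (Hinit z); lra. }
  set (V := fun z x => a z x * a z x + 4 * x).
  assert (HpV : periodic_z V).
  { intros z x. unfold V. rewrite Pa. reflexivity. }
  assert (JCV : forall x, 0 <= x < T -> forall z, JC V z x).
  { intros x Hx z. apply cont_JC. apply cont_V. apply Ca. exact Hx. }
  assert (JCa : forall x, 0 <= x < T -> forall z, JC a z x).
  { intros x Hx z. apply cont_JC. apply Ca. exact Hx. }
  assert (Mono : forall t', t <= t' < T -> amin V t <= amin V t').
  { intros t' Ht'.
    assert (JCV' : forall x, t <= x <= t' -> forall z, JC V z x) by (intros; apply JCV; lra).
    set (F := fun x => amin V x - amin V t).
    cut (0 <= F t'). { unfold F; lra. }
    apply (minprinciple F t t'); [lra| | unfold F; lra | ].
    - intros x Hx eps He. destruct (amin_cont V t t' HpV JCV' x Hx eps He) as [d [Hd H']].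
      exists d; split; auto. intros y Hy Hyx. unfold F.
      replace (amin V y - amin V t - (amin V x - amin V t)) with (amin V y - amin V x) by ring.
      apply H'; auto.
    - intros s [Hs0 Hs1] _.
      assert (Hs : 0 < s < T) by lra.
      destruct (min_att V s HpV (JCV' s ltac:(lra))) as [z0 [_ [Hm0 E0]]].
      exists (fun x => V z0 x - amin V t), (2 * a z0 s * dt a z0 s + 4).
      split.
      { intros h Hh. destruct (min_att V h HpV (JCV' h ltac:(lra))) as [z1 [_ [Hm1 E1]]].
        unfold F. rewrite E1. specialize (Hm1 z0). lra. }
      split. { unfold F. rewrite E0. reflexivity. }
      split.
      { apply is_derive_Reals. unfold V. destruct (Hda z0 s Hs) as [_ [Hta _]].
        auto_derive. repeat split; exact Hta. unfold dt. ring. }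
      destruct (Hpos z0 s ltac:(lra)) as [HA [HB [HC Hph]]].
      assert (Hmina : forall z, a z0 s <= a z s).
      { intros z. specialize (Hm0 z). unfold V in Hm0. destruct (Hpos z s ltac:(lra)) as [Haz _]. nra. }
      destruct (min_deriv2 (fun z => a z s) z0 Hmina (fun z => proj1 (Hda z s Hs))
                  (proj2 (proj2 (Hda z0 s Hs)))) as [H1 H2].
      change (dz a z0 s = 0) in H1. change (0 <= Derive (fun z' => dz a z' s) z0) in H2.
      pose proof (proj1 (PDE z0 s Hs)) as Ea.
      rewrite ss_formula in Ea; [| exact (proj2 (proj2 (Hda z0 s Hs))) | exact (Hdphi z0 s Hs) | lra].
      unfold ds in Ea. rewrite H1 in Ea.
      apply (alg_amin (a z0 s) (b z0 s) (c z0 s) (phi z0 s) (dz b z0 s) (dz c z0 s) (dz phi z0 s)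
               (Derive (fun z' => dz a z' s) z0)); auto.
      apply Oab; lra. apply Oac; lra. }
  destruct (min_att a t Pa (JCa t Ht)) as [za [_ [Hma Ea]]].
  destruct (min_att V t HpV (JCV t Ht)) as [zv [_ [Hmv Ev]]].
  assert (Hle : amin a t ^ 2 + 4 * t <= amin V t).
  { rewrite Ea, Ev. unfold V. specialize (Hma zv).
    destruct (Hpos za t Ht) as [Hza _]. simpl. nra. }
  assert (Hup : forall t', t <= t' < T -> amin V t' <= amin a t' ^ 2 + 4 * t').
  { intros t' Ht'. destruct (min_att a t' Pa (JCa t' ltac:(lra))) as [z' [_ [_ E']]].
    destruct (min_att V t' HpV (JCV t' ltac:(lra))) as [z'' [_ [Hm E]]].
    rewrite E, E'. specialize (Hm z'). unfold V in Hm |- *. simpl. lra. }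
  destruct (Rle_lt_dec (amin a t ^ 2) (4 * (T - t))) as [|Hgt]; auto. exfalso.
  set (del := amin a t ^ 2 - 4 * (T - t)).
  assert (Hdel : 0 < del) by (unfold del; lra).
  set (eps := Rmin 1 (del / 2)).
  assert (Heps : 0 < eps) by (unfold eps; apply Rmin_pos; lra).
  destruct (proj1 (@filterlim_locally R R_UniformSpace _ _ _ _) Hlim (mkposreal eps Heps)) as [d Hd].
  unfold ball in Hd. simpl in Hd. unfold AbsRing_ball in Hd. unfold abs, minus, plus, opp in Hd. simpl in Hd.
  set (y := Rmax t (T - d / 2)).
  assert (Hd0 : 0 < d) by (destruct d; simpl; lra).
  assert (Hy1 : t <= y) by apply Rmax_l.
  assert (Hy2 : y < T) by (unfold y; apply Rmax_lub_lt; lra).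
  assert (Hy3 : T - d / 2 <= y) by apply Rmax_r.
  assert (Hyd : Rabs (y + - T) < d) by (rewrite Rabs_left; lra).
  specialize (Hd y Hyd Hy2). rewrite Ropp_0, Rplus_0_r in Hd.
  assert (He1 : eps <= 1) by apply Rmin_l.
  assert (He2 : eps <= del / 2) by apply Rmin_r.
  assert (Hsq : amin a y ^ 2 <= eps).
  { apply Rabs_def2 in Hd. simpl. nra. }
  pose proof (Mono y (conj Hy1 Hy2)). pose proof (Hup y (conj Hy1 Hy2)).
  unfold del in *. lra.
Qed.
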